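(* Let $0\le\underline{\tau}<\overline{\tau}<\infty$, $\gamma\ge 0$, $\delta\ge0$, let $f$ be a piecewise continuous probability density supported on $[\underline{\tau},\overline{\tau}]$, and let $\beta:[0,\infty)\to(0,\infty)$ be continuous and decreasing with $\lim_{x\to+\infty}\beta(x)=0$. Let $(x(t),y(t))$ be a solution of the system $$x'(t)=-\big(\delta+\beta(x(t))\big)x(t)+2\int_{\underline{\tau}}^{\overline{\tau}}e^{-\gamma\tau}f(\tau)\beta(x(t-\tau))x(t-\tau)\,d\tau,$$ $$y'(t)=-\gamma y(t)+\beta(x(t))x(t)-\int_{\underline{\tau}}^{\overline{\tau}}e^{-\gamma\tau}f(\tau)\beta(x(t-\tau))x(t-\tau)\,d\tau,\qquad t\ge\overline{\tau},$$ arising from the hematopoiesis model described in the context, so that $$y(t)=\int_{\underline{\tau}}^{\overline{\tau}}f(\tau)\left(\int_{t-\tau}^{t}e^{-\gamma(t-s)}\beta(x(s))x(s)\,ds\right)d\tau\quad\text{for } t\ge\overline{\tau}.$$ If $\lim_{t\to+\infty}x(t)$ exists and equals $C\ge0$, then $$\lim_{t\to+\infty}y(t)=\begin{cases}\beta(C)C\displaystyle\int_{\underline{\tau}}^{\overline{\tau}}f(\tau)\frac{1-e^{-\gamma\tau}}{\gamma}\,d\tau,&\gamma>0,\\[2mm] \beta(C)C\displaystyle\int_{\underline{\tau}}^{\overline{\tau}}\tau f(\tau)\,d\tau,&\gamma=0.\end{cases}$$ Moreover, if $x(t)$ is $P$-periodic, then $y(t)$ is also $P$-periodic.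
   Context: The model: $x(t)\ge0$ is the total resting (G$_0$) stem cell population and $y(t)\ge0$ the total proliferating population; resting cells die/differentiate at rate $\delta$ and enter proliferation at rate $\beta(x(t))$; proliferating cells die at rate $\gamma$ and divide (each into two resting cells) after a time distributed with density $f$. The function $x\mapsto x\beta(x)$ is Lipschitz continuous; for every initial resting population $\mu\ge0$ the model has a unique nonnegative continuous solution $(x,y)$ on $[0,\infty)$, which for $t\ge\overline{\tau}$ satisfies the displayed system and the displayed explicit formula for $y$. *)

(* Defs.v *)
From Stdlib Require Import Reals.
From Coquelicot Require Import Coquelicot.
Open Scope R_scope.

Definition piecewise_continuous (f : R -> R) (a b : R) : Prop :=
  exists (n : nat) (p : nat -> R),
    p 0%nat = a /\ p n = b /\
    (forall i, (i < n)%nat -> p i < p (S i)) /\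
    (forall i, (i < n)%nat ->
       (forall t, p i < t < p (S i) -> continuous f t) /\
       (exists l, filterlim f (at_right (p i)) (locally l)) /\
       (exists r, filterlim f (at_left (p (S i))) (locally r))).

Definition pc_density_on (f : R -> R) (a b : R) : Prop :=
  piecewise_continuous f a b /\
  (forall t, 0 <= f t) /\
  (forall t, t < a \/ b < t -> f t = 0) /\
  is_RInt f a b 1.

Definition continuous_on_nonneg (g : R -> R) : Prop :=
  forall u, 0 <= u -> filterlim g (within (fun v => 0 <= v) (locally u)) (locally (g u)).

(* Main.v *)
Require Import Defs.
From Stdlib Require Import Reals Lra Lia.
From Coquelicot Require Import Coquelicot.
Open Scope R_scope.

Lemma within_to_cont (g : R -> R) s :
  continuous_on_nonneg g -> 0 < s -> continuous g s.
Proof.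
  intros Hg Hs P HP.
  specialize (Hg s (Rlt_le _ _ Hs) P HP).
  unfold filtermap, within in Hg |- *.
  generalize (filter_and _ _ Hg (open_gt 0 s Hs)).
  apply filter_imp. intros v [H1 H2]. apply H1. lra.
Qed.

Lemma comp_cont (beta x : R -> R) s :
  continuous_on_nonneg beta -> continuous x s ->
  locally s (fun v => 0 <= x v) -> continuous (fun v => beta (x v)) s.
Proof.
  intros Hb Hx Hn.
  assert (H0 : 0 <= x s) by exact (locally_singleton _ _ Hn).
  eapply filterlim_comp with (G := within (fun v => 0 <= v) (locally (x s))).
  - intros P HP. unfold within in HP. unfold filtermap.
    pose proof (Hx _ HP) as Hx1. unfold filtermap in Hx1.
    generalize (filter_and _ _ Hx1 Hn).
    apply filter_imp. intros v [H1 H2]. now apply H1.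
  - now apply Hb.
Qed.

Lemma piece_int (f g : R -> R) a b l r : a < b ->
  (forall t, a < t < b -> continuous f t) ->
  filterlim f (at_right a) (locally l) ->
  filterlim f (at_left b) (locally r) ->
  (forall s, a <= s <= b -> continuous g s) ->
  ex_RInt (fun t => f t * g t) a b.
Proof.
  intros Hab Hc Hl Hr Hg.
  pose (F := fun t : R => if Rle_dec t a then l else if Rle_dec b t then r else f t).
  apply ex_RInt_ext with (fun t => F t * g t).
  - intros t Ht. rewrite Rmin_left, Rmax_right in Ht by lra. unfold F.
    destruct Rle_dec; [lra|]. destruct Rle_dec; [lra|]. auto.
  - apply (ex_RInt_continuous (V := R_CompleteNormedModule)). intros z Hz.
    rewrite Rmin_left, Rmax_right in Hz by lra.
    apply (continuous_mult F g); [| now apply Hg].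
    destruct (Req_dec z a) as [Ez|Ez].
    + subst z. unfold continuous.
      replace (F a) with l by (unfold F; destruct Rle_dec; lra).
      intros P HP. unfold filtermap.
      pose proof (Hl P HP) as Hl1. unfold filtermap, at_right, within in Hl1.
      generalize (filter_and _ _ Hl1 (open_lt b a Hab)).
      apply filter_imp. intros y [H1 H2]. unfold F.
      destruct Rle_dec. { exact (locally_singleton _ _ HP). }
      destruct Rle_dec; [lra|]. apply H1; lra.
    + destruct (Req_dec z b) as [Ezb|Ezb].
      * subst z. unfold continuous.
        replace (F b) with r by (unfold F; destruct Rle_dec; [lra|]; destruct Rle_dec; lra).
        intros P HP. unfold filtermap.
        pose proof (Hr P HP) as Hr1. unfold filtermap, at_left, within in Hr1.
        generalize (filter_and _ _ Hr1 (open_gt a b Hab)).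
        apply filter_imp. intros y [H1 H2]. unfold F.
        destruct Rle_dec; [lra|].
        destruct Rle_dec. { exact (locally_singleton _ _ HP). }
        apply H1; lra.
      * apply continuous_ext_loc with f; [| apply Hc; lra].
        assert (Hz2 : a < z < b) by lra.
        generalize (open_and _ _ (open_gt a) (open_lt b) z Hz2).
        apply filter_imp. intros y Hy. unfold F. destruct Rle_dec; [lra|]. destruct Rle_dec; [lra|]. reflexivity.
Qed.


Lemma pc_mult (f g : R -> R) a b : piecewise_continuous f a b ->
  (forall s, a <= s <= b -> continuous g s) ->
  ex_RInt (fun t => f t * g t) a b.
Proof.
  intros [n [p [H0 [Hn [Hm Hp]]]]] Hg.
  assert (Mono: forall i j, (i <= j)%nat -> (j <= n)%nat -> p i <= p j).
  { intros i j Hij. induction Hij; intros Hj. lra.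
    specialize (IHHij ltac:(lia)). specialize (Hm m ltac:(lia)). lra. }
  assert (H : forall k, (k <= n)%nat -> ex_RInt (fun t => f t * g t) (p 0%nat) (p k)).
  { induction k; intros Hk. apply ex_RInt_point.
    apply ex_RInt_Chasles with (p k). apply IHk; lia.
    destruct (Hp k ltac:(lia)) as [Hc [[l Hl] [r Hr]]].
    apply piece_int with l r; [apply Hm; lia | exact Hc | exact Hl | exact Hr |].
    intros s Hs. apply Hg.
    pose proof (Mono 0%nat k ltac:(lia) ltac:(lia)).
    pose proof (Mono (S k) n ltac:(lia) ltac:(lia)).
    rewrite <- H0, <- Hn. lra. }
  rewrite <- H0, <- Hn. apply H; lia.
Qed.

Lemma cont_Ropp (g : R -> R) s : continuous g s -> continuous (fun u => - g u) s.
Proof. intros H. now apply (continuous_opp (K := R_AbsRing) (V := R_NormedModule) g). Qed.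
Lemma cont_comp (g h : R -> R) s : continuous g s -> continuous h (g s) -> continuous (fun u => h (g u)) s.
Proof. intros H1 H2. now apply (continuous_comp g h). Qed.

Lemma ex_der_cont (g : R -> R) s : ex_derive g s -> continuous g s.
Proof. intros H. now apply (ex_derive_continuous (K := R_AbsRing) (V := R_NormedModule)). Qed.

Lemma cont_Rmult (f g : R->R) s : continuous f s -> continuous g s -> continuous (fun u => f u * g u) s.
Proof. intros; now apply (continuous_mult f g). Qed.

Lemma exp_le1 u : u <= 0 -> exp u <= 1.
Proof.
  intros H. destruct (Rle_lt_or_eq_dec _ _ H) as [H1|H1].
  - rewrite <- exp_0. left. now apply exp_increasing.
  - subst. rewrite exp_0. lra.
Qed.

Theorem lemma2p1
  (tl th gamma delta : R) (f beta x y : R -> R)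
  (Htau : 0 <= tl < th) (Hgamma : 0 <= gamma) (Hdelta : 0 <= delta)
  (Hf : pc_density_on f tl th)
  (Hbeta_pos : forall u, 0 <= u -> 0 < beta u)
  (Hbeta_cont : continuous_on_nonneg beta)
  (Hbeta_dec : forall u v, 0 <= u -> u <= v -> beta v <= beta u)
  (Hbeta_lim : is_lim beta p_infty 0)
  (Hx_nonneg : forall t, 0 <= t -> 0 <= x t)
  (Hy_nonneg : forall t, 0 <= t -> 0 <= y t)
  (Hx_cont : continuous_on_nonneg x)
  (Hy_cont : continuous_on_nonneg y)
  (Hx_ode : forall t, th < t ->
     is_derive x t
       (- (delta + beta (x t)) * x t
        + 2 * RInt (fun tau => exp (- gamma * tau) * f tau
                              * beta (x (t - tau)) * x (t - tau)) tl th))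
  (Hy_ode : forall t, th < t ->
     is_derive y t
       (- gamma * y t + beta (x t) * x t
        - RInt (fun tau => exp (- gamma * tau) * f tau
                           * beta (x (t - tau)) * x (t - tau)) tl th))
  (Hy_formula : forall t, th <= t ->
     y t = RInt (fun tau => f tau *
             RInt (fun s => exp (- gamma * (t - s)) * beta (x s) * x s) (t - tau) t)
             tl th) :
  (forall C : R, 0 <= C -> is_lim x p_infty C ->
     (0 < gamma ->
        is_lim y p_infty
          (beta C * C * RInt (fun tau => f tau * (1 - exp (- gamma * tau)) / gamma) tl th))
     /\
     (gamma = 0 ->
        is_lim y p_infty (beta C * C * RInt (fun tau => tau * f tau) tl th)))
  /\
  (forall P : R, 0 < P -> (forall t, 0 <= t -> x (t + P) = x t) ->
     forall t, th <= t -> y (t + P) = y t).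
Proof.
  pose (K := fun t s => exp (- gamma * (t - s)) * beta (x s) * x s).
  assert (Kcont : forall t s, 0 < s -> continuous (K t) s).
  { intros t s Hs. unfold K.
    apply (cont_Rmult (fun s => exp (- gamma * (t - s)) * beta (x s)) x).
    - apply (cont_Rmult (fun s => exp (- gamma * (t - s))) (fun s => beta (x s))).
      + apply ex_der_cont. auto_derive. easy.
      + apply comp_cont; auto. now apply within_to_cont.
        generalize (open_gt 0 s Hs). apply filter_imp. intros v Hv. apply Hx_nonneg; lra.
    - now apply within_to_cont. }
  assert (Kint : forall t a b, 0 < a -> 0 < b -> ex_RInt (K t) a b).
  { intros t a b Ha Hb. apply (ex_RInt_continuous (V := R_CompleteNormedModule)).
    intros z Hz. apply Kcont. assert (0 < Rmin a b) by (apply Rmin_glb_lt; lra). lra. }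
  split.
  2:{
  intros P HP Hper t Ht. rewrite !Hy_formula by lra. apply RInt_ext.
  intros tau Htau'. rewrite Rmin_left, Rmax_right in Htau' by lra.
  f_equal.
  change (RInt (K (t+P)) (t+P-tau) (t+P) = RInt (K t) (t-tau) t).
  assert (E: forall a b a' b', a = a' -> b = b' -> RInt (K (t+P)) a b = RInt (K (t+P)) a' b') by (intros; subst; reflexivity).
  transitivity (RInt (K (t+P)) (1*(t-tau)+P) (1*t+P)). { apply E; ring. }
  rewrite <- RInt_comp_lin by (apply Kint; lra).
  apply RInt_ext. intros s Hs. rewrite Rmin_left, Rmax_right in Hs by lra.
  unfold K. replace (1*s+P) with (s+P) by ring. rewrite Hper by lra.
  replace (t+P-(s+P)) with (t-s) by ring.
  change (1 * (exp (- gamma * (t - s)) * beta (x s) * x s) = exp (- gamma * (t - s)) * beta (x s) * x s). ring.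
  }

  intros C HC Hlim.
  destruct Hf as [Hpc [Hfpos [Hfsupp Hf1]]].
  assert (Hbl : is_lim (fun s => beta (x s)) p_infty (beta C)).
  { eapply filterlim_comp with (G := within (fun v => 0 <= v) (locally C)).
    - intros Q HQ. unfold within in HQ. pose proof (Hlim _ HQ) as H1. unfold filtermap in H1.
      assert (H2 : Rbar_locally' p_infty (fun s => 0 <= x s)).
      { exists 0. intros s Hs. apply Hx_nonneg; lra. }
      unfold filtermap. generalize (filter_and (F := Rbar_locally' p_infty) _ _ H1 H2). apply filter_imp. intros v [H3 H4]. now apply H3.
    - now apply Hbeta_cont. }
  pose proof (is_lim_mult _ _ _ _ _ Hbl Hlim I) as Hh. simpl in Hh.
  apply is_lim_spec in Hh.
  set (L := beta C * C) in *.
  assert (Gen : forall E : R -> R, (forall tau, continuous E tau) ->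
    (forall t tau, tl <= tau <= th -> RInt (fun s => exp (- gamma * (t - s))) (t - tau) t = E tau) ->
    is_lim y p_infty (L * RInt (fun tau => f tau * E tau) tl th)).
  { intros E HEc HE. apply is_lim_spec. intros eps.
    assert (Heps' : 0 < eps / (2 * (th + 1))).
    { apply Rdiv_lt_0_compat. apply cond_pos. lra. }
    pose (eps' := mkposreal _ Heps').
    destruct (Hh eps') as [T HT].
    exists (Rmax (T + th) th). intros t Ht.
    assert (Ht1 : T + th < t) by (eapply Rle_lt_trans; [apply Rmax_l|exact Ht]).
    assert (Ht2 : th < t) by (eapply Rle_lt_trans; [apply Rmax_r|exact Ht]).
    assert (IntG : ex_RInt (fun tau => f tau * RInt (K t) (t - tau) t) tl th).
    { apply (pc_mult f (fun tau => RInt (K t) (t - tau) t)); auto.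
      intros tau0 Htau0.
      apply continuous_ext_loc with (g := fun tau => - (RInt (K t) t (t - tau))).
      - assert (Hlt : tau0 < t) by lra.
        generalize (open_lt t tau0 Hlt). apply filter_imp. intros tau Htau1.
        apply (opp_RInt_swap (V := R_CompleteNormedModule)). apply Kint; lra.
      - apply cont_Ropp.
        apply (cont_comp (fun tau => t - tau) (fun z => RInt (K t) t z)).
        + apply ex_der_cont. auto_derive. easy.
        + cbv beta. assert (Hp : 0 < t - tau0) by lra.
          apply (continuous_RInt_1 (V := R_NormedModule) (K t) t (t - tau0) (fun z => RInt (K t) t z)).
          generalize (open_gt 0 (t - tau0) Hp). apply filter_imp. intros z Hz.
          apply (RInt_correct (V := R_CompleteNormedModule)). apply Kint; lra. }
    assert (IntE0 : ex_RInt (fun tau => f tau * E tau) tl th).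
    { apply pc_mult; auto. }
    assert (IntE : ex_RInt (fun tau => f tau * (L * E tau)) tl th).
    { apply (pc_mult f (fun tau => L * E tau)); auto. intros s Hs.
      apply (cont_Rmult (fun _ => L) E). apply continuous_const. apply HEc. }
    assert (EV : L * RInt (fun tau => f tau * E tau) tl th = RInt (fun tau => f tau * (L * E tau)) tl th).
    { transitivity (scal L (RInt (fun tau => f tau * E tau) tl th)). reflexivity.
      rewrite <- RInt_scal by exact IntE0. apply RInt_ext. intros.
      change (L * (f x0 * E x0) = f x0 * (L * E x0)). ring. }
    rewrite Hy_formula by lra. rewrite EV.
    change (Rabs (RInt (fun tau => f tau * RInt (K t) (t - tau) t) tl th
       - RInt (fun tau => f tau * (L * E tau)) tl th) < eps).
    assert (D : RInt (fun tau => f tau * RInt (K t) (t - tau) t) tl th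
       - RInt (fun tau => f tau * (L * E tau)) tl th =
       RInt (fun tau => f tau * (RInt (K t) (t - tau) t - L * E tau)) tl th).
    { transitivity (minus (RInt (fun tau => f tau * RInt (K t) (t - tau) t) tl th)
        (RInt (fun tau => f tau * (L * E tau)) tl th)). reflexivity.
      rewrite <- RInt_minus by assumption. apply RInt_ext. intros.
      unfold minus, plus, opp. simpl. ring. }
    rewrite D.
    assert (IntD : ex_RInt (fun tau => f tau * (RInt (K t) (t - tau) t - L * E tau)) tl th).
    { apply ex_RInt_ext with (fun tau => minus (f tau * RInt (K t) (t - tau) t) (f tau * (L * E tau))).
      intros. unfold minus, plus, opp. simpl. ring.
      apply (ex_RInt_minus (V := R_NormedModule) (fun tau => f tau * RInt (K t) (t - tau) t) (fun tau => f tau * (L * E tau))); assumption. }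
    assert (Bd : Rabs (RInt (fun tau => f tau * (RInt (K t) (t - tau) t - L * E tau)) tl th) <= scal (eps' * th) 1).
    { apply (norm_RInt_le (V := R_NormedModule) (fun tau => f tau * (RInt (K t) (t - tau) t - L * E tau)) (fun tau => scal (eps' * th) (f tau)) tl th).
      - lra.
      - intros tau Htau0.
        change (Rabs (f tau * (RInt (K t) (t - tau) t - L * E tau)) <= eps' * th * f tau).
        rewrite Rabs_mult, (Rabs_pos_eq (f tau)) by apply Hfpos.
        rewrite <- (HE t tau Htau0).
        assert (Ie : ex_RInt (fun s => exp (- gamma * (t - s))) (t - tau) t).
        { apply (ex_RInt_continuous (V := R_CompleteNormedModule)). intros z Hz.
          apply ex_der_cont. auto_derive. easy. }
        assert (Ik : ex_RInt (K t) (t - tau) t) by (apply Kint; lra).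
        assert (Hin : Rabs (RInt (K t) (t - tau) t - L * RInt (fun s => exp (- gamma * (t - s))) (t - tau) t) <= eps' * th).
        { replace (RInt (K t) (t - tau) t - L * RInt (fun s => exp (- gamma * (t - s))) (t - tau) t)
            with (RInt (fun s => K t s - L * exp (- gamma * (t - s))) (t - tau) t).
          2:{ symmetry.
            transitivity (minus (RInt (K t) (t - tau) t) (scal L (RInt (fun s => exp (- gamma * (t - s))) (t - tau) t))).
            reflexivity.
            rewrite <- (RInt_scal (V := R_CompleteNormedModule) _ _ _ L Ie).
            rewrite <- (RInt_minus (V := R_CompleteNormedModule)).
            apply RInt_ext. intros; reflexivity.
            exact Ik.
            apply (ex_RInt_scal (V := R_NormedModule)). exact Ie. }
          assert (Hpt : forall s, t - tau <= s <= t -> norm (K t s - L * exp (- gamma * (t - s))) <= eps').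
          { intros s Hs. change (Rabs (K t s - L * exp (- gamma * (t - s))) <= eps'). unfold K.
            replace (exp (- gamma * (t - s)) * beta (x s) * x s - L * exp (- gamma * (t - s)))
              with (exp (- gamma * (t - s)) * (beta (x s) * x s - L)) by ring.
            rewrite Rabs_mult, (Rabs_pos_eq (exp _)) by (left; apply exp_pos).
            assert (He : exp (- gamma * (t - s)) <= 1).
            { apply exp_le1. assert (0 <= gamma * (t - s)) by (apply Rmult_le_pos; lra). lra. }
            assert (Hb : Rabs (beta (x s) * x s - L) < eps') by (apply HT; lra).
            pose proof (Rabs_pos (beta (x s) * x s - L)).
            pose proof (exp_pos (- gamma * (t - s))). nra. }
          assert (IKe : ex_RInt (fun s => K t s - L * exp (- gamma * (t - s))) (t - tau) t).
          { apply (ex_RInt_ext (V := R_NormedModule) (fun s => minus (K t s) (scal L (exp (- gamma * (t - s)))))).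
            intros; reflexivity.
            apply (ex_RInt_minus (V := R_NormedModule)). exact Ik.
            apply (ex_RInt_scal (V := R_NormedModule)). exact Ie. }
          assert (Hn : norm (RInt (fun s => K t s - L * exp (- gamma * (t - s))) (t - tau) t) <= (t - (t - tau)) * eps').
          { apply (norm_RInt_le_const (V := R_NormedModule) (fun s => K t s - L * exp (- gamma * (t - s)))
              (t - tau) t _ eps'). lra. exact Hpt.
            apply (RInt_correct (V := R_CompleteNormedModule)). exact IKe. }
          change (norm ?z) with (Rabs z) in Hn.
          pose proof (cond_pos eps').
          replace (t - (t - tau)) with tau in Hn by ring.
          assert (tau * eps' <= th * eps') by (apply Rmult_le_compat_r; [apply Rlt_le, cond_pos | lra]). lra. }
        rewrite (Rmult_comm (eps' * th)). apply Rmult_le_compat_l. apply Hfpos. exact Hin.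
      - apply (RInt_correct (V := R_CompleteNormedModule)). exact IntD.
      - exact (is_RInt_scal (V := R_NormedModule) f tl th (eps' * th) 1 Hf1). }
    change (scal (eps' * th) 1) with (eps' * th * 1) in Bd.
    assert (eps' * (2 * (th + 1)) = eps) by (simpl; field; lra).
    assert (0 < eps') by apply cond_pos.
    nra. }
  split.
  - intros Hg.
    replace (RInt (fun tau => f tau * (1 - exp (- gamma * tau)) / gamma) tl th)
      with (RInt (fun tau => f tau * ((1 - exp (- gamma * tau)) / gamma)) tl th)
      by (apply RInt_ext; intros; simpl; field; lra).
    apply Gen.
    + intros tau. apply ex_der_cont. auto_derive. easy.
    + intros t tau _. apply is_RInt_unique.
      replace ((1 - exp (- gamma * tau)) / gamma) with
        (minus (exp (- gamma * (t - t)) / gamma) (exp (- gamma * (t - (t - tau))) / gamma)).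
      2:{ unfold minus, plus, opp; simpl. replace (- gamma * (t - t)) with 0 by ring.
          replace (- gamma * (t - (t - tau))) with (- gamma * tau) by ring. rewrite exp_0. field. lra. }
      apply (is_RInt_derive (V := R_CompleteNormedModule) (fun s => exp (- gamma * (t - s)) / gamma)
        (fun s => exp (- gamma * (t - s)))).
      * intros. auto_derive. easy. replace (t + - x0) with (t - x0) by ring. field. lra.
      * intros. apply ex_der_cont. auto_derive. easy.
  - intros Hg.
    replace (RInt (fun tau => tau * f tau) tl th) with (RInt (fun tau => f tau * tau) tl th)
      by (apply RInt_ext; intros; simpl; ring).
    apply Gen.
    + intros tau. apply continuous_id.
    + intros t tau _. rewrite Hg. transitivity (RInt (fun _ => 1) (t - tau) t).
      apply RInt_ext. intros. replace (- 0 * (t - x0)) with 0 by ring. apply exp_0.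
      rewrite RInt_const. change ((t - (t - tau)) * 1 = tau). ring.
Qed.
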